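(* A topological space $(X,\tau)$ is a D-space if and only if for every continuous map $f:(X,\tau)\to(\mathcal P(X),\tau_{\mathcal S(X)})$ with $x\in f(x)$ for all $x\in X$, there exist a continuous neighborhood refinement map $f_*$ of $f$ and a closed discrete set $D\subseteq X$ such that the map $g:(X,\tau)\to(\mathcal P(D),\tau_{\mathcal S(D)})$, $g(x)=f_*(x)\cap D$, is continuous and satisfies $g^{-1}(\{\emptyset\})=\emptyset$.
   Context: For a set $A$ and $a\in A$, $\mathcal U_A(a)=\{B\subseteq A: a\in B\}$; the principal ultrafilter topology $\tau_{\mathcal S(A)}$ on $\mathcal P(A)$ is generated by the subbase $\{\mathcal U_A(a): a\in A\}$. A continuous neighborhood refinement map of $f$ is a continuous map $f_*:(X,\tau)\to(\mathcal P(X),\tau_{\mathcal S(X)})$ with $x\in f_*(x)\subseteq f(x)$ for all $x$. An open neighborhood assignment is $N:X\to\tau$ with $x\in N(x)$; $X$ is a D-space if every open neighborhood assignment $N$ admits a closed discrete $D\subseteq X$ with $\bigcup_{d\in D}N(d)=X$. *)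

(* Defs.v *)
From mathcomp Require Import all_boot.
From mathcomp Require Import boolp classical_sets cardinality topology.
Set Implicit Arguments. Unset Strict Implicit. Unset Printing Implicit Defensive.
Local Open Scope classical_set_scope.

(* For A : set T, P(A) is represented as the sets B : set T with B `<=` A.
   U_A(a) = [set B | B `<=` A /\ B a]. *)
Definition PU_sub (T : Type) (A : set T) (a : T) : set (set T) :=
  [set B | B `<=` A /\ B a].

(* Open sets of the topology on P(A) generated by the subbase {U_A(a) : a in A}:
   unions of finite intersections of subbase elements (the empty intersection
   being P(A) itself). *)
Definition PU_open (T : Type) (A : set T) (W : set (set T)) : Prop :=
  W `<=` [set B | B `<=` A] /\
  forall B, W B -> exists F : set T,
    [/\ finite_set F, F `<=` A, B `<=` A /\ (forall a, F a -> B a) &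
        (forall C, C `<=` A -> (forall a, F a -> C a) -> W C)].

Definition PU_continuous (X : topologicalType) (A : set X) (g : X -> set X) : Prop :=
  (forall x, g x `<=` A) /\ (forall W, PU_open A W -> open (g @^-1` W)).

Definition closed_discrete (X : topologicalType) (D : set X) : Prop :=
  closed D /\ forall x, D x -> exists U : set X, [/\ open U, U x & U `&` D = [set x]].

Definition open_nbhd_assignment (X : topologicalType) (N : X -> set X) : Prop :=
  forall x, open (N x) /\ N x x.

Definition D_space (X : topologicalType) : Prop :=
  forall N : X -> set X, open_nbhd_assignment N ->
    exists D : set X, closed_discrete D /\ \bigcup_(d in D) N d = setT.

Definition cont_nbhd_refinement (X : topologicalType) (f fs : X -> set X) : Prop :=
  PU_continuous setT fs /\ forall x, fs x x /\ fs x `<=` f x.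

(* Main.v *)
Require Import Defs.
From mathcomp Require Import all_boot.
From mathcomp Require Import boolp classical_sets cardinality topology.
From mathcomp Require Import finmap.
Local Open Scope classical_set_scope.

Lemma pre_open (X : topologicalType) (f : X -> set X) :
  PU_continuous setT f -> forall a, open [set y | f y a].
Proof.
move=> [_ fc] a.
have -> : [set y | f y a] = f @^-1` PU_sub setT a.
  by apply/seteqP; split=> y /=; rewrite /PU_sub /=; [move=> h; split|case].
apply: fc; split; first by move=> B [].
move=> B [_ Ba]; exists [set a]; split.
- exact: finite_set1.
- by [].
- by split=> // b ->.
- by move=> C _ h; split=> //; apply: h.
Qed.

Lemma inter_cont (X : topologicalType) (f : X -> set X) (D : set X) :
  PU_continuous setT f -> PU_continuous D (fun x => f x `&` D).
Proof.
move=> fc; split; first by move=> x y [].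
move=> W [Wsub WP]; rewrite openE => x /= Wx.
have [F [/finite_fsetP[S SE] FD [_ Fg] Wc]] := WP _ Wx.
rewrite /interior /=.
have HI : nbhs x (\bigcap_(i in [set` S]) [set y | f y i]).
  apply: filter_bigI => i iS; apply: open_nbhs_nbhs; split.
    exact: pre_open.
  have : F i by rewrite SE.
  by move=> /Fg [].
apply: filterS HI.
move=> y yI /=; apply: Wc; first by move=> z [].
move=> a Fa; have Sa : [set` S] a by rewrite -SE.
split; [exact: (yI a Sa)|exact: FD].
Qed.

Theorem mainTheorem19 (X : topologicalType) :
  D_space X <->
  (forall f : X -> set X, PU_continuous setT f -> (forall x, f x x) ->
     exists (fs : X -> set X) (D : set X),
       [/\ cont_nbhd_refinement f fs, closed_discrete D,
           PU_continuous D (fun x => fs x `&` D) &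
           (fun x => fs x `&` D) @^-1` [set set0] = set0]).
Proof.
split.
- move=> HD f fc fx.
  have [D [cD cov]] := HD (fun a => [set y | f y a])
    (fun a => conj (@pre_open X f fc a) (fx a)).
  exists f, D; split=> //.
  + by split=> // x; split.
  + exact: inter_cont.
  + apply/seteqP; split=> // x /= h.
    have : (\bigcup_(d in D) [set y | f y d]) x by rewrite cov.
    case=> d Dd fxd.
    have : (f x `&` D) d by split.
    by rewrite h.
- move=> H N HN.
  pose f := fun x => [set y | N y x].
  have fc : PU_continuous setT f.
    split=> // W [Wsub WP]; rewrite openE => x /= Wx.
    have [F [/finite_fsetP[S SE] _ [_ Fg] Wc]] := WP _ Wx.
    have HI : nbhs x (\bigcap_(i in [set` S]) N i).
      apply: filter_bigI => i iS; apply: open_nbhs_nbhs; split.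
        exact: (HN i).1.
      have : F i by rewrite SE.
      exact: Fg.
    apply: filterS HI.
    move=> y yI /=; apply: Wc => // a Fa.
    by apply: yI; rewrite -SE.
  have [fs [D [[_ fsf] cD _ e]]] := H f fc (fun x => (HN x).2).
  exists D; split=> //.
  apply/seteqP; split=> // x _.
  have [d [fsd Dd]] : exists d, (fs x `&` D) d.
    apply: contrapT => hn.
    have : ((fun x => fs x `&` D) @^-1` [set set0]) x.
      by apply/seteqP; split=> // d hd; apply: hn; exists d.
    by rewrite e.
  exists d => //.
  exact: ((fsf x).2 _ fsd).
Qed.
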